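(* Let $R$ be an exchange ring and $e_1,\dots,e_n\in R$ idempotents. Then there exists an idempotent $e\in e_1R+\cdots+e_nR$ such that $e_1R\subseteq eR$ and $e_iR$ is isomorphic to a direct summand of $eR$ for all $i$. In particular, $ReR=Re_1R+\cdots+Re_nR$.
   Context: All rings are unital and modules are right modules. A ring $R$ is an exchange ring if the right module $R_R$ has the finite exchange property: for every module $A$ and internal direct sum decompositions $A=M'\oplus N=A_1\oplus\cdots\oplus A_n$ with $M'\cong R_R$, there exist submodules $A_i'\subseteq A_i$ with $A=M'\oplus A_1'\oplus\cdots\oplus A_n'$ (equivalently: for every $a\in R$ there is an idempotent $e\in aR$ with $1-e\in(1-a)R$). *)

(* Defs.v *)
From HB Require Import structures.
From mathcomp Require Import all_boot all_order all_algebra.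
Set Implicit Arguments. Unset Strict Implicit. Unset Printing Implicit Defensive.
Import GRing.Theory.
Local Open Scope ring_scope.

(* Exchange ring, via the element-wise characterization given in the context:
   for every a there is an idempotent e in aR with 1 - e in (1 - a)R. *)
Definition exchange_ring (R : pzRingType) : Prop :=
  forall a : R, exists e : R,
    e * e = e /\ (exists r, e = a * r) /\ (exists s, 1 - e = (1 - a) * s).

Definition principal_right_ideal (R : pzRingType) (a : R) : R -> Prop :=
  fun x => exists r, x = a * r.

Definition sum_right_ideals (R : pzRingType) (n : nat) (e : 'I_n -> R) : R -> Prop :=
  fun x => exists r : 'I_n -> R, x = \sum_(i < n) e i * r i.

Definition twosided_ideal (R : pzRingType) (n : nat) (f : 'I_n -> R) : R -> Prop :=
  fun x => exists (m : nat) (a b : 'I_m -> R) (k : 'I_m -> 'I_n),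
    x = \sum_(j < m) a j * f (k j) * b j.

Definition is_submodule (R : pzRingType) (A : R -> Prop) : Prop :=
  A 0 /\ (forall x y, A x -> A y -> A (x + y)) /\ (forall x r, A x -> A (x * r)).

Definition module_iso (R : pzRingType) (M A : R -> Prop) (f : R -> R) : Prop :=
  (forall x, M x -> A (f x)) /\
  (forall x y, M x -> M y -> f (x + y) = f x + f y) /\
  (forall x r, M x -> f (x * r) = f x * r) /\
  (forall x y, M x -> M y -> f x = f y -> x = y) /\
  (forall z, A z -> exists x, M x /\ f x = z).

Definition iso_direct_summand (R : pzRingType) (M N : R -> Prop) : Prop :=
  exists (A B : R -> Prop),
    is_submodule A /\ is_submodule B /\
    (forall x, A x -> N x) /\ (forall x, B x -> N x) /\
    (forall x, N x -> exists a b, A a /\ B b /\ x = a + b) /\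
    (forall x, A x -> B x -> x = 0) /\
    exists f : R -> R, module_iso M A f.

(* Main.v *)
Require Import Defs.
From HB Require Import structures.
From mathcomp Require Import all_boot all_order all_algebra.
Import GRing.Theory.
Set Implicit Arguments. Unset Strict Implicit.
Local Open Scope ring_scope.

Definition J (R : pzRingType) (e1 e2 : R) (z : R) := exists r s, z = e1*r + e2*s.

Lemma J_add (R : pzRingType) (e1 e2 x y : R) : J e1 e2 x -> J e1 e2 y -> J e1 e2 (x + y).
Proof.
move=> [r [s ->]] [r' [s' ->]]; exists (r + r'), (s + s').
by rewrite !mulrDr addrACA.
Qed.
Lemma J_opp (R : pzRingType) (e1 e2 x : R) : J e1 e2 x -> J e1 e2 (- x).
Proof. by move=> [r [s ->]]; exists (- r), (- s); rewrite !mulrN opprD. Qed.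
Lemma J_mulr (R : pzRingType) (e1 e2 x t : R) : J e1 e2 x -> J e1 e2 (x * t).
Proof. by move=> [r [s ->]]; exists (r * t), (s * t); rewrite mulrDl !mulrA. Qed.
Lemma J_l (R : pzRingType) (e1 e2 t : R) : J e1 e2 (e1 * t).
Proof. by exists t, 0; rewrite mulr0 addr0. Qed.
Lemma J_r (R : pzRingType) (e1 e2 t : R) : J e1 e2 (e2 * t).
Proof. by exists 0, t; rewrite mulr0 add0r. Qed.

Lemma pair (R : pzRingType) (e1 e2 : R) : exchange_ring R -> e1*e1 = e1 -> e2*e2 = e2 ->
 exists f x y : R, f*f = f /\ J e1 e2 f /\ f*e1 = e1 /\ x = f*x*e2 /\ y = e2*y*f /\ y*x = e2.
Proof.
move=> ex h1 h2.
have [h [hh [[r hr] [s hs]]]] := ex (e2*(1-e1)*e2 + (1-e2)).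
have E1 : 1 - (e2*(1-e1)*e2 + (1-e2)) = e2*e1*e2.
  by rewrite mulrBr mulr1 mulrBl h2 opprD !opprB subrKA addrC subrK.
rewrite E1 in hs.
set k := 1 - h in hs.
have kk : k * k = k.
  by rewrite /k mulrBl mul1r mulrBr mulr1 hh subrr subr0.
have e2k : e2 * k = k by rewrite hs !mulrA h2.
set p := e2 - k * e2.
set q := k * e2.
have e2p : e2 * p = p by rewrite /p mulrBr h2 mulrA e2k.
have pe2 : p * e2 = p by rewrite /p mulrBl h2 -mulrA h2.
have qe2 : q * e2 = q by rewrite /q -mulrA h2.
have e2q : e2 * q = q by rewrite /q mulrA e2k.
have qq : q * q = q by rewrite /q -mulrA (mulrA e2) e2k mulrA kk.
have pq : p * q = 0 by rewrite /p mulrBl e2q qq subrr.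
have qp : q * p = 0 by rewrite /p mulrBr qe2 qq subrr.
have pp : p * p = p by rewrite {1}/p mulrBl e2p qp subr0.
have pqe : p + q = e2 by rewrite /p /q subrK.
have ph : p = h * e2 by rewrite /p /k mulrBl mul1r opprB addrC subrK.
have pE : p = e2 * (1 - e1) * e2 * r * e2.
  rewrite -e2p {1}ph hr !mulrA mulrDr (mulrBr e2 1 e2) mulr1 h2 subrr addr0 !mulrA h2.
  done.
have qE : q = e2 * e1 * e2 * s * e2 by rewrite /q hs.
clearbody p q.
set T := e2 * r * e2 * p.
set g := (1 - e1) * T.
have e2g : e2 * g = p by rewrite /g /T !mulrA -pE pp.
have gp : g * p = g by rewrite /g /T !mulrA -(mulrA _ p p) pp.
have pg : p * g = p by rewrite -{1}pe2 -mulrA e2g pp.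
have gg : g * g = g by rewrite {1}/g /T -!mulrA pg /g /T !mulrA.
have e1g : e1 * g = 0 by rewrite /g mulrA mulrBr mulr1 h1 subrr mul0r.
have ge2 : g * e2 = g by rewrite -gp -mulrA pe2.
have Jg : J e1 e2 g.
  rewrite /g mulrBl mul1r; apply: J_add; last apply: J_opp.
    by rewrite /T -!mulrA; apply: J_r.
  by apply: J_l.
clearbody g.
set U := e2 * s * e2 * q.
set w := e1 * U.
have e2w : e2 * w = q.
  have -> : e2 * w = (e2 * e1 * e2 * s * e2) * q by rewrite /w /U !mulrA.
  by rewrite -qE qq.
have wq : w * q = w by rewrite /w /U -!mulrA qq.
have qw : q * w = q by rewrite -{1}qe2 -mulrA e2w qq.
have ww : w * w = w by rewrite {1}/w /U -!mulrA qw /w /U !mulrA.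
have we2 : w * e2 = w by rewrite -wq -mulrA qe2.
have e1w : e1 * w = w by rewrite /w mulrA h1.
clearbody w.
have gw : g * w = 0 by rewrite -gp -mulrA -{1}pe2 -mulrA e2w pq mulr0.
have wg : w * g = 0 by rewrite -wq -mulrA -qe2 -mulrA e2g qp mulr0.
set f := e1 + g - g * e1.
have e1f : e1 * f = e1 by rewrite /f mulrBr mulrDr h1 e1g mulrA e1g mul0r subr0 addr0.
have gf : g * f = g by rewrite /f mulrBr mulrDr gg mulrA gg (addrC (g * e1)) addrK.
have ff : f * f = f by rewrite {1}/f mulrBl mulrDl e1f gf -mulrA e1f.
have fe1 : f * e1 = e1 by rewrite /f mulrBl mulrDl h1 -mulrA h1 addrK.
have fg : f * g = g by rewrite /f mulrBl mulrDl e1g gg -mulrA e1g mulr0 add0r subr0.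
have fw : f * w = w by rewrite /f mulrBl mulrDl e1w gw -mulrA e1w gw addr0 subr0.
have Jf : J e1 e2 f.
  apply: J_add; last by apply/J_opp/J_mulr.
  apply: J_add => //; have := J_l e1 e2 1; rewrite mulr1; exact.
clearbody f.
exists f, (g + w), (e2 * (g + w * e1)).
split; first exact: ff.
split; first exact: Jf.
split; first exact: fe1.
split; first by rewrite -mulrA mulrDl ge2 we2 mulrDr fg fw.
split; first by rewrite -!mulrA mulrDl gf -mulrA e1f mulrA h2.
rewrite -mulrA mulrDl !mulrDr gg gw -mulrA e1g mulr0 -mulrA e1w ww !mulr0 !addr0 add0r e2g e2w pqe.
done.
Qed.
Section TI.
Variables (R : pzRingType) (N : nat) (g : 'I_N -> R).

Lemma T0 : twosided_ideal g 0.
Proof. by exists 0%N, (fun _ => 0), (fun _ => 0), (fun j : 'I_0 => False_rect _ (notF (ltn_ord j))); rewrite big_ord0. Qed.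

Lemma Tadd x y : twosided_ideal g x -> twosided_ideal g y -> twosided_ideal g (x + y).
Proof.
move=> [m1 [a1 [b1 [k1 ->]]]] [m2 [a2 [b2 [k2 ->]]]].
exists (m1 + m2)%N,
  (fun j => match split j with inl i => a1 i | inr i => a2 i end),
  (fun j => match split j with inl i => b1 i | inr i => b2 i end),
  (fun j => match split j with inl i => k1 i | inr i => k2 i end).
rewrite big_split_ord /=; congr (_ + _); apply: eq_bigr => i _.
  by have := unsplitK (inl i : 'I_m1 + 'I_m2); rewrite /= => ->.
by have := unsplitK (inr i : 'I_m1 + 'I_m2); rewrite /= => ->.
Qed.

Lemma TmulL c x : twosided_ideal g x -> twosided_ideal g (c * x).
Proof.
move=> [m [a [b [k ->]]]]; exists m, (fun j => c * a j), b, k.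
by rewrite mulr_sumr; apply: eq_bigr => i _; rewrite !mulrA.
Qed.

Lemma TmulR c x : twosided_ideal g x -> twosided_ideal g (x * c).
Proof.
move=> [m [a [b [k ->]]]]; exists m, a, (fun j => b j * c), k.
by rewrite mulr_suml; apply: eq_bigr => i _; rewrite !mulrA.
Qed.

Lemma Tgen i : twosided_ideal g (g i).
Proof. by exists 1%N, (fun _ => 1), (fun _ => 1), (fun _ => i); rewrite big_ord1 mul1r mulr1. Qed.

Lemma Tsum m (F : 'I_m -> R) : (forall j, twosided_ideal g (F j)) -> twosided_ideal g (\sum_(j < m) F j).
Proof.
move=> H; apply: (big_ind (twosided_ideal g)) => //; [exact: T0 | exact: Tadd].
Qed.
End TI.

Lemma Tsub (R : pzRingType) N M (g : 'I_N -> R) (h : 'I_M -> R) x :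
  (forall i, twosided_ideal h (g i)) -> twosided_ideal g x -> twosided_ideal h x.
Proof.
move=> H [m [a [b [k ->]]]]; apply: Tsum => j; apply: TmulR; apply: TmulL; exact: H.
Qed.

Lemma psub (R : pzRingType) (c : R) : is_submodule (principal_right_ideal c).
Proof.
split; first by exists 0; rewrite mulr0.
split; first by move=> x y [r ->] [s ->]; exists (r + s); rewrite mulrDr.
by move=> x t [r ->]; exists (r * t); rewrite mulrA.
Qed.

Lemma iso_from (R : pzRingType) (ei f x y : R) : ei * ei = ei -> f * f = f ->
  x = f * x * ei -> y = ei * y * f -> y * x = ei ->
  iso_direct_summand (principal_right_ideal ei) (principal_right_ideal f).
Proof.
move=> hi hf hx hy yx.
have fx : f * x = x by rewrite {1}hx !mulrA hf -hx.
have xe : x * ei = x by rewrite {1}hx -mulrA hi -hx.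
have ey : ei * y = y by rewrite {1}hy !mulrA hi -hy.
have yf : y * f = y by rewrite {1}hy -mulrA hf -hy.
have gg : x * y * (x * y) = x * y by rewrite mulrA -(mulrA x y x) yx xe.
have fg : f * (x * y) = x * y by rewrite mulrA fx.
have gf : x * y * f = x * y by rewrite -mulrA yf.
have xg : x = x * y * x by rewrite -mulrA yx xe.
exists (principal_right_ideal (x * y)), (principal_right_ideal (f - x * y)).
split; first exact: psub.
split; first exact: psub.
split; first by move=> z [r ->]; exists (x * y * r); rewrite mulrA fg.
split; first by move=> z [r ->]; exists ((f - x * y) * r); rewrite mulrA mulrBr hf fg.
split.
  move=> z [r ->]; exists (x * y * r), ((f - x * y) * r); split; first by exists r.
  by split; [exists r | rewrite -mulrDl addrC subrK].
split.
  move=> z [r zr] [t zt].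
  have : x * y * z = z by rewrite zr mulrA gg.
  by rewrite {1}zt mulrA mulrBr gf gg subrr mul0r.
exists (fun z => x * z); split.
  by move=> z _; exists (x * z); rewrite mulrA -xg.
split; first by move=> z w _ _; rewrite mulrDr.
split; first by move=> z t _; rewrite mulrA.
split.
  move=> z w [r ->] [t ->] H.
  have K u : ei * u = y * (x * (ei * u)) by rewrite mulrA yx mulrA hi.
  by rewrite K (K t) H.
move=> z [r ->]; exists (y * r); split; first by exists (y * r); rewrite mulrA ey.
by rewrite mulrA.
Qed.
Lemma S_add (R : pzRingType) N (e : 'I_N -> R) x y :
  sum_right_ideals e x -> sum_right_ideals e y -> sum_right_ideals e (x + y).
Proof.
move=> [r ->] [s ->]; exists (fun i => r i + s i).
by rewrite -big_split; apply: eq_bigr => i _; rewrite mulrDr.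
Qed.

Lemma S_mulr (R : pzRingType) N (e : 'I_N -> R) x t :
  sum_right_ideals e x -> sum_right_ideals e (x * t).
Proof.
move=> [r ->]; exists (fun i => r i * t).
by rewrite mulr_suml; apply: eq_bigr => i _; rewrite mulrA.
Qed.

Lemma S_gen (R : pzRingType) N (e : 'I_N -> R) i t : sum_right_ideals e (e i * t).
Proof.
exists (fun j => if j == i then t else 0).
rewrite (bigD1 i) //= eqxx big1 ?addr0 // => j /negbTE ->; by rewrite mulr0.
Qed.

Lemma main_ind (R : pzRingType) n (e : 'I_n.+1 -> R) : exchange_ring R ->
  (forall i, e i * e i = e i) ->
  forall m, (m <= n)%N -> exists f, f * f = f /\ sum_right_ideals e f /\ f * e ord0 = e ord0 /\
   forall i : 'I_n.+1, (i <= m)%N ->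
     exists x y, x = f * x * e i /\ y = e i * y * f /\ y * x = e i.
Proof.
move=> ex hE; elim=> [_|m IH Hm].
  exists (e ord0); split; first exact: hE.
  split; first by have := S_gen e ord0 1; rewrite mulr1.
  split; first exact: hE.
  move=> i; rewrite leqn0 => /eqP i0.
  have -> : i = ord0 by apply: val_inj.
  by exists (e ord0), (e ord0); rewrite !hE.
have [f [ff [Sf [fe0 Hf]]]] := IH (ltnW Hm).
pose j : 'I_n.+1 := Ordinal (Hm : (m.+1 < n.+1)%N).
have [f' [x' [y' [ff' [[r [s Jf']] [f'f [hx' [hy' yx']]]]]]]] := pair ex ff (hE j).
exists f'; split; first exact: ff'.
split; first by rewrite Jf'; apply: S_add; [apply: S_mulr | apply: S_gen].
split; first by rewrite -fe0 mulrA f'f.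
move=> i Hi; case: (leqP i m) => Him.
  have [x [y [hx [hy yx]]]] := Hf i Him.
  have f'x : f' * x = x by rewrite {1}hx !mulrA f'f -hx.
  have xe : x * e i = x by rewrite {1}hx -mulrA hE -hx.
  have ey : e i * y = y by rewrite {1}hy !mulrA hE -hy.
  exists x, (y * f'); split; first by rewrite f'x xe.
  split; first by rewrite !mulrA -(mulrA _ f' f') ff' ey.
  by rewrite -mulrA f'x.
have -> : i = j by apply: val_inj => /=; apply/eqP; rewrite eqn_leq Hi Him.
by exists x', y'.
Qed.

Unset Implicit Arguments.
Theorem lemma2p1 (R : pzRingType) (n : nat) (e : 'I_n.+1 -> R) :
  exchange_ring R ->
  (forall i, e i * e i = e i) ->
  exists f : R,
    f * f = f /\
    sum_right_ideals e f /\
    (forall x, principal_right_ideal (e ord0) x -> principal_right_ideal f x) /\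
    (forall i, iso_direct_summand (principal_right_ideal (e i))
                                  (principal_right_ideal f)) /\
    (forall x, twosided_ideal (fun _ : 'I_1 => f) x <-> twosided_ideal e x).
Proof.
move=> ex hE.
have [f [ff [Sf [fe0 Hf]]]] := main_ind ex hE (leqnn n).
exists f; split; first exact: ff.
split; first exact: Sf.
split; first by move=> x [t ->]; exists (e ord0 * t); rewrite mulrA fe0.
have Hf' : forall i : 'I_n.+1, exists x y, x = f * x * e i /\ y = e i * y * f /\ y * x = e i.
  by move=> i; apply: Hf; rewrite -ltnS.
split.
  move=> i; have [x [y [hx [hy yx]]]] := Hf' i; exact: iso_from (hE i) ff hx hy yx.
move=> z; split; apply: Tsub.
  move=> _ /=; case: Sf => r ->; apply: Tsum => j; apply: TmulR; exact: Tgen.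
move=> i; have [x [y [hx [hy yx]]]] := Hf' i.
rewrite -yx {1}hy; apply: TmulR; apply: TmulL; exact: (Tgen (fun _ : 'I_1 => f) ord0).
Qed.
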